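(* Let $(N,\mathcal{M})$ be a matroid of rank $K$, $Z$ monotone submodular with $Z(\emptyset)=0$, $G=(g_1,\dots,g_K)$ the output of a run of GREEDY, and $\Omega$ an optimal basis ordered as $(\omega_1,\dots,\omega_K)$ so that $G^{i-1}\cup\{\omega_i\}\in\mathcal{M}$ for all $i$ and $\omega_i\in G\cap\Omega$ implies $\omega_i=g_i$. Then for every $t\in\{1,\dots,K\}$ and every $i$ with $\omega_i\in\Omega\setminus G$: $$\rho_{\omega_i}(G^{t-1})\le\begin{cases}\rho_t, & i>t,\\[2pt] \dfrac{\rho_i}{d_i}, & 1\le i\le t.\end{cases}$$
   Context: Matroid $(N,\mathcal{M})$ of rank $K$ (independent sets containing $\emptyset$, closed under subsets, with augmentation); basis = independent set of size $K$; optimal basis = basis maximizing $Z$ over $\mathcal{M}$. $\rho_q(S)=Z(S\cup\{q\})-Z(S)$; $S_\bot=\{j\in N\setminus S:S\cup\{j\}\in\mathcal{M}\}$. GREEDY: $G^0=\emptyset$; for $i=1,\dots,K$ choose $g_i\in\arg\max\{\rho_q(G^{i-1}):q\in G^{i-1}_\bot\}$, $G^i=G^{i-1}\cup\{g_i\}$, $G=G^K$, $\rho_i=\rho_{g_i}(G^{i-1})$. Discriminant $d_i=\rho_{g_i}(G^{i-1})/\max\{\rho_{g'}(G^{i-1}):g'\in G^{i-1}_\bot,g'\ne g_i\}$ ($=\infty$ if the maximum is $0$); $\rho_i/\infty=0$. *)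

(* Defs.v *)
From HB Require Import structures.
From mathcomp Require Import all_boot all_order all_algebra.
Set Implicit Arguments. Unset Strict Implicit. Unset Printing Implicit Defensive.
Import Order.TTheory GRing.Theory Num.Theory.
Local Open Scope ring_scope.

Section Defs.
Variable T : finType.
Variable R : realFieldType.

Definition is_matroid (M : {set {set T}}) : Prop :=
  [/\ set0 \in M,
      (forall A B : {set T}, B \in M -> A \subset B -> A \in M) &
      (forall A B : {set T}, A \in M -> B \in M -> (#|A| < #|B|)%N ->
         exists2 x, x \in B :\: A & x |: A \in M)].

Definition matroid_rank (M : {set {set T}}) (K : nat) : Prop :=
  (exists2 B, B \in M & #|B| = K) /\ (forall B, B \in M -> (#|B| <= K)%N).

Definition is_basis (M : {set {set T}}) (K : nat) (B : {set T}) : Prop :=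
  B \in M /\ #|B| = K.

Definition optimal_basis (M : {set {set T}}) (K : nat) (Z : {set T} -> R)
  (B : {set T}) : Prop :=
  is_basis M K B /\ (forall B', is_basis M K B' -> Z B' <= Z B).

Definition monotone (Z : {set T} -> R) : Prop :=
  forall A B : {set T}, A \subset B -> Z A <= Z B.

Definition submodular (Z : {set T} -> R) : Prop :=
  forall A B : {set T}, Z (A :|: B) + Z (A :&: B) <= Z A + Z B.

Definition rho (Z : {set T} -> R) (q : T) (S : {set T}) : R :=
  Z (q |: S) - Z S.

Definition perp (M : {set {set T}}) (S : {set T}) : {set T} :=
  [set j | (j \notin S) && (j |: S \in M)].

(* G^i = {g_1, ..., g_i}, sequences indexed from 1 *)
Definition Gpre (g : nat -> T) (i : nat) : {set T} :=
  [set x | [exists j : 'I_i, g j.+1 == x]].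

Definition greedy_run (M : {set {set T}}) (K : nat) (Z : {set T} -> R)
  (g : nat -> T) : Prop :=
  forall i : nat, (1 <= i <= K)%N ->
    g i \in perp M (Gpre g i.-1) /\
    (forall q, q \in perp M (Gpre g i.-1) ->
       rho Z q (Gpre g i.-1) <= rho Z (g i) (Gpre g i.-1)).

Definition rho_i (Z : {set T} -> R) (g : nat -> T) (i : nat) : R :=
  rho Z (g i) (Gpre g i.-1).

(* extended positive value for the discriminant *)
Inductive extR := Fin of R | Inf.

(* max{ rho_{g'}(G^{i-1}) : g' in G^{i-1}_bot, g' <> g_i }  (all candidates
   have nonnegative gains under monotonicity; empty max taken as 0) *)
Definition max_other (M : {set {set T}}) (Z : {set T} -> R) (g : nat -> T)
  (i : nat) : R :=
  \big[Num.max/0]_(q in perp M (Gpre g i.-1) | q != g i)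
     rho Z q (Gpre g i.-1).

Definition discriminant (M : {set {set T}}) (Z : {set T} -> R) (g : nat -> T)
  (i : nat) : extR :=
  if max_other M Z g i == 0 then Inf
  else Fin (rho_i Z g i / max_other M Z g i).

Definition div_ext (x : R) (d : extR) : R :=
  match d with Fin r => x / r | Inf => 0 end.

End Defs.

(* Main.v *)
Require Import Defs.
From HB Require Import structures.
From mathcomp Require Import all_boot all_order all_algebra.
Import Order.TTheory GRing.Theory Num.Theory.
Local Open Scope ring_scope.

Lemma Gpre_mono {T : finType} (g : nat -> T) {a b : nat} :
  (a <= b)%N -> Gpre g a \subset Gpre g b.
Proof.
move=> ab; apply/subsetP => x; rewrite !inE => /existsP [j Hj].
by apply/existsP; exists (widen_ord ab j).
Qed.

Lemma g_in_Gpre {T : finType} (g : nat -> T) i K :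
  (1 <= i <= K)%N -> g i \in Gpre g K.
Proof.
case/andP=> i1 iK; rewrite inE; apply/existsP.
have h : (i.-1 < K)%N by case: i i1 iK.
exists (Ordinal h) => /=; rewrite prednK //.
Qed.

Lemma bigmax_seq_ge {T : eqType} {R : realDomainType} (P : pred T) (F : T -> R)
  (r : seq T) x : x \in r -> P x -> F x <= \big[Num.max/0]_(i <- r | P i) F i.
Proof.
elim: r => [//|y r IH]; rewrite in_cons big_cons => /orP [/eqP -> Py|xr Px].
  by rewrite Py le_max lexx.
case: (P y); last exact: IH.
by rewrite le_max (IH xr Px) orbT.
Qed.

Lemma dim_returns {T : finType} {R : realFieldType} (Z : {set T} -> R) x (A B : {set T}) :
  monotone Z -> submodular Z -> A \subset B -> rho Z x B <= rho Z x A.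
Proof.
move=> mon sub AB; rewrite /rho.
have h1 := sub (x |: A) B.
have h2 : Z A <= Z ((x |: A) :&: B).
  apply: mon; rewrite subsetI AB andbT; exact: subsetUr.
have e : (x |: A) :|: B = x |: B.
  by rewrite -setUA (setUidPr AB).
rewrite e in h1.
rewrite lerBlDr addrAC lerBrDr; apply: le_trans h1.
by rewrite lerD2l.
Qed.

Theorem lemma11 (T : finType) (R : realFieldType) (M : {set {set T}}) (K : nat)
  (Z : {set T} -> R) (g omega : nat -> T) (Omega : {set T}) :
  is_matroid M -> matroid_rank M K ->
  monotone Z -> submodular Z -> Z set0 = 0 ->
  greedy_run M K Z g ->
  optimal_basis M K Z Omega ->
  Omega = Gpre omega K ->
  (forall i, (1 <= i <= K)%N -> omega i |: Gpre g i.-1 \in M) ->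
  (forall i, (1 <= i <= K)%N -> omega i \in Gpre g K :&: Omega ->
     omega i = g i) ->
  forall t i, (1 <= t <= K)%N -> (1 <= i <= K)%N ->
    omega i \in Omega :\: Gpre g K ->
    rho Z (omega i) (Gpre g t.-1) <=
      (if (t < i)%N then rho_i Z g t
       else div_ext (rho_i Z g i) (discriminant M Z g i)).
Proof.
move=> [_ Msub _] _ mon sub _ gr _ _ Hom _ t i Ht Hi.
rewrite inE => /andP [nG _].
have nGpre : forall a, (a <= K)%N -> omega i \notin Gpre g a.
  move=> a aK; apply/negP => H; move/negP: nG; apply.
  by move/subsetP: (Gpre_mono g aK); apply.
have iK : (i.-1 <= K)%N by case/andP: Hi => _ iK; apply: leq_trans (leq_pred _) iK.
have tK : (t.-1 <= K)%N by case/andP: Ht => _ tK; apply: leq_trans (leq_pred _) tK.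
case: ifP => ti.
- have [_ Hg] := gr t Ht; apply: Hg.
  rewrite inE nGpre //=.
  apply: (Msub _ _ (Hom i Hi)); apply: setUS; apply: Gpre_mono.
  by rewrite -!subn1 leq_sub2r // ltnW.
- have Hp : omega i \in perp M (Gpre g i.-1) by rewrite inE nGpre // Hom.
  have it : (i.-1 <= t.-1)%N by rewrite -!subn1 leq_sub2r // leqNgt ti.
  apply: le_trans (dim_returns _ _ _ _ mon sub (Gpre_mono g it)) _.
  have [Hgi Hg] := gr i Hi.
  have Hmax : rho Z (omega i) (Gpre g i.-1) <= max_other M Z g i.
    rewrite /max_other; apply: (bigmax_seq_ge (fun q => (q \in perp M (Gpre g i.-1)) && (q != g i)) (fun q => rho Z q (Gpre g i.-1))); first exact: mem_index_enum.
    rewrite /= Hp /=; apply/eqP => E; move: (nGpre K (leqnn K)).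
    by rewrite E g_in_Gpre.
  rewrite /discriminant /div_ext; case: ifP => [/eqP m0 | /negbT m0].
    by rewrite -m0.
  case: (eqVneq (rho_i Z g i) 0) => r0.
    by rewrite r0 !mul0r -r0; apply: Hg.
  by rewrite invf_div mulrCA divff // mulr1.
Qed.
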